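(* Let $D$ be an integral domain with quotient field $K$, let $L/K$ be an algebraic field extension, and let $A$ be any subring of $L$ containing $D$. Then for any $\mathrm{reg}(A)$-factroid $F$ of any $A$-submodule $M$ of $L$ such that $D\subseteq F$, one has $A \subseteq F$. In particular, $A$ is the only factroid of $A$ containing $D$.
   Context: $\mathrm{reg}(A)=A\setminus\{0\}$ for the domain $A$. For $T\subseteq A$ and an $A$-module $M$, a $T$-factroid of $M$ is an additive subgroup $F$ of $M$ such that for all $x\in M$ and $t\in T$, $tx\in F$ implies $x\in F$. A factroid of $A$ is a $\mathrm{reg}(A)$-factroid of the $A$-module $A$. *)

(* Defs.v *)
From HB Require Import structures.
From mathcomp Require Import all_boot all_order all_algebra fraction.
Set Implicit Arguments. Unset Strict Implicit. Unset Printing Implicit Defensive.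
Import GRing.Theory.
Local Open Scope ring_scope.

(* reg(A) = A \ {0}, for a subring A of a field L (a domain). *)
Definition reg (L : fieldType) (A : {pred L}) : {pred L} :=
  [pred x | (x \in A) && (x != 0)].

Definition is_submodule (L : fieldType) (A M : {pred L}) : Prop :=
  zmod_closed M /\ (forall a x, a \in A -> x \in M -> a * x \in M).

Definition is_factroid (L : fieldType) (T M F : {pred L}) : Prop :=
  [/\ {subset F <= M}, zmod_closed F &
      (forall x t, x \in M -> t \in T -> t * x \in F -> x \in F)].

Definition algebraic_over (K L : fieldType) (f : {rmorphism K -> L}) : Prop :=
  forall x : L, exists2 p : {poly K}, p != 0 & root (map_poly f p) x.

(* Main.v *)
Require Import Defs.
From HB Require Import structures.
From mathcomp Require Import all_boot all_order all_algebra fraction.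
Import GRing.Theory.
Local Open Scope ring_scope.

Lemma frac_rep (D : idomainType) (x : {fraction D}) :
  exists n d, d != 0 /\ x * FracField.tofrac d = FracField.tofrac n.
Proof.
elim/quotW: x => r; exists r.1, r.2; split; first exact: denom_ratioP.
rewrite !piE; apply/eqmodP => /=.
rewrite FracField.equivfE /= /FracField.mulf !numden_Ratio ?mulf_neq0 ?denom_ratioP ?oner_eq0 //.
by rewrite !mulr1 mulrC.
Qed.


Lemma horner_in (L : fieldType) (A : {pred L}) (HA : subring_closed A)
  (p : {poly L}) x : (forall i, p`_i \in A) -> x \in A -> p.[x] \in A.
Proof.
case: HA => A1 AB AM.
have A0 : 0 \in A by rewrite -(subrr 1); apply: (AB).
have AD : forall u v, u \in A -> v \in A -> u + v \in A.
  move=> u v uA vA; rewrite -[v]opprK -[- v]sub0r; apply: (AB) => //; exact: (AB).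
move=> Hp xA; elim/poly_ind: p Hp => [|q c IH] Hp; first by rewrite horner0.
rewrite hornerD hornerMX hornerC; apply: AD; last first.
  by have := Hp 0%N; rewrite coefD coefMX coefC eqxx add0r.
apply: (AM) => //; apply: IH => i.
by have := Hp i.+1; rewrite coefD coefMX coefC /= addr0.
Qed.

Lemma clear_den (D : idomainType) (s : seq {fraction D}) :
  exists2 d, d != 0 &
    forall i, exists n, nth 0 s i * FracField.tofrac d = FracField.tofrac n.
Proof.
elim: s => [|x s [d d0 IH]].
  exists 1; first exact: oner_neq0.
  by move=> i; exists 0; rewrite nth_nil mul0r rmorph0.
have [m [e [e0 He]]] := frac_rep _ x.
exists (d * e); first by rewrite mulf_neq0.
case=> [|i] /=.
  by exists (m * d); rewrite !rmorphM /= (mulrC (tofrac d)) mulrA He.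
have [n Hn] := IH i; exists (n * e).
by rewrite !rmorphM /= mulrA Hn.
Qed.

Theorem proposition4p13
  (D : idomainType) (L : fieldType) (f : {rmorphism {fraction D} -> L})
  (Halg : algebraic_over f)
  (A : {pred L}) (HA : subring_closed A)
  (HDA : forall d : D, f (FracField.tofrac d) \in A) :
  (forall M F : {pred L},
      is_submodule A M -> is_factroid (reg A) M F ->
      (forall d : D, f (FracField.tofrac d) \in F) ->
      {subset A <= F})
  /\
  (forall F : {pred L},
      is_factroid (reg A) A F ->
      (forall d : D, f (FracField.tofrac d) \in F) ->
      F =i A).
Proof.
have key : forall M F : {pred L},
      is_submodule A M -> is_factroid (reg A) M F ->
      (forall d : D, f (FracField.tofrac d) \in F) ->
      {subset A <= F}.
  move=> M F [HMz HMA] [FM HFz HFd] HDF a aA.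
  have Fz : zmod_closed F := HFz.
  have [->|a0] := eqVneq a 0; first by case: Fz.
  have one_M : 1 \in M by apply: FM; have := HDF 1; rewrite !rmorph1.
  have aM : a \in M by have := HMA a 1 aA one_M; rewrite mulr1.
  have [p p0 rp] := Halg a.
  have [m [q nq Dp]] := multiplicity_XsubC p 0.
  rewrite p0 /= in nq.
  have {rp} rq : (map_poly f q).[a] = 0.
    move: rp; rewrite /root Dp rmorphM rmorphXn /= rmorphB /= map_polyX map_polyC /=.
    rewrite hornerM horner_exp hornerD hornerN hornerX hornerC rmorph0 subr0.
    by rewrite mulf_eq0 expf_eq0 (negPf a0) andbF orbF => /eqP.
  have [d d0 Hd] := clear_den _ q.
  pose r := map_poly f (FracField.tofrac d *: q).
  have rA : forall i, r`_i \in A.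
    move=> i; rewrite /r coef_map /= coefZ mulrC.
    by have [n ->] := Hd i; exact: HDA.
  pose r1 := drop_poly 1 r.
  have r1A : forall i, r1`_i \in A.
    by move=> i; rewrite coef_drop_poly; exact: rA.
  have ra : r.[a] = 0.
    by rewrite /r linearZ /= hornerZ rq mulr0.
  have Er : r.[a] = r`_0 + r1.[a] * a.
    have -> : r = r1 * 'X + (r`_0)%:P.
      apply/polyP => i; rewrite coefD coefMX coefC /r1.
      by case: i => [|i] /=; rewrite ?add0r ?addr0 // coef_drop_poly addn1.
    by rewrite hornerD hornerMX hornerC addrC coefD coefMX coefC eqxx add0r.
  have [n0 Hn0] := Hd 0%N.
  have r0 : r`_0 = f (FracField.tofrac n0).
    by rewrite /r coef_map /= coefZ mulrC Hn0.
  have r0n : r`_0 != 0.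
    rewrite /r coef_map /= coefZ fmorph_eq0 mulf_neq0 //; first by rewrite tofrac_eq0.
    by move: nq; rewrite /root horner_coef0.
  apply: (HFd a (- r1.[a])) => //.
    rewrite inE; apply/andP; split.
      by case: HA => A1 AB AM; rewrite -sub0r; apply: (AB); [rewrite -(subrr 1); exact: AB | exact: horner_in].
    rewrite oppr_eq0; apply: contraNneq r0n => h.
    by move: ra; rewrite Er h mul0r addr0 => ->.
  rewrite mulNr.
  have -> : - (r1.[a] * a) = r`_0 by apply/eqP; rewrite eq_sym -subr_eq0 opprK -Er ra.
  rewrite r0; exact: HDF.
split => // F HF HDF.
have HAmod : is_submodule A A.
  case: HA => A1 AB AM; split; last by move=> a x aA xA; exact: AM.
  by split => //; rewrite -(subrr 1); exact: AB.
have sAF := key A F HAmod HF HDF.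
case: HF => FA _ _ x; apply/idP/idP; [exact: FA | exact: sAF].
Qed.
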